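(* Let $G$ be a graph with a valid edge partition, and let $V_1,V_2$ be the associated vertex partition. Suppose that $\sum_{u\in V_i}\deg u$ is odd for $i=1,2$ and that $G$ has an odd number of vertices. Then the number of cycles compatible with the edge partition is odd.
   Context: A spanning 2-forest is a spanning forest with exactly two trees (a tree may be a single vertex). A valid edge partition of a graph is a bipartition of its edge set such that one part is the edge set of a spanning tree and the other part is the edge set of a spanning 2-forest. The associated vertex partition $V_1,V_2$ consists of the vertex sets of the two trees of the 2-forest. A cycle $C$ is compatible with the valid edge partition if all vertices of $C$ lie in the same part of the vertex partition and exactly one edge of $C$ lies in the spanning-tree part. Degrees are taken in $G$. *)

(* Defs.v *)
(* A finite simple graph on vertex type T is given by its
   edge set E : {set {set T}}, each edge being a 2-element vertex set. *)
From mathcomp Require Import all_boot.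
Set Implicit Arguments. Unset Strict Implicit. Unset Printing Implicit Defensive.

Section Graphs.
Variable T : finType.
Implicit Types (E F C : {set {set T}}) (V : {set T}).

Definition simple_graph E : bool := [forall e in E, #|e| == 2].

Definition adj F : rel T := fun x y => [set x; y] \in F.

Definition deg E (u : T) : nat := #|[set e in E | u \in e]|.

Definition verts C : {set T} := [set x | [exists e in C, x \in e]].

Definition is_cycle C : bool :=
  [&& C != set0,
      [forall x in verts C, #|[set e in C | x \in e]| == 2] &
      [forall x in verts C, forall y in verts C, connect (adj C) x y]].

Definition is_forest F : bool := [forall C : {set {set T}}, (C \subset F) ==> ~~ is_cycle C].

Definition spanning_tree F : bool :=
  is_forest F && [forall x, forall y, connect (adj F) x y].

Definition spanning_2forest_parts F V : bool :=
  [&& is_forest F, V != set0, ~: V != set0 &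
      [forall x, forall y, connect (adj F) x y == ((x \in V) == (y \in V))]].

Definition valid_edge_partition E Ft Ff : bool :=
  [&& Ft :|: Ff == E, [disjoint Ft & Ff], spanning_tree Ft &
      [exists V, spanning_2forest_parts Ff V]].

Definition compatible_cycle E Ft V C : bool :=
  [&& C \subset E, is_cycle C,
      (verts C \subset V) || (verts C \subset ~: V) &
      #|C :&: Ft| == 1].

End Graphs.

(* Main.v *)
Require Import Defs.
From mathcomp Require Import all_boot zify.
Set Implicit Arguments. Unset Strict Implicit. Unset Printing Implicit Defensive.

Section S.
Variable T : finType.
Implicit Types (E F C D : {set {set T}}).

Lemma adj_sym F : symmetric (adj F).
Proof. by move=> x y; rewrite /adj setUC. Qed.

Lemma conn_sym F x y : connect (adj F) x y = connect (adj F) y x.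
Proof. exact: (sym_connect_sym (adj_sym F)). Qed.

Lemma conn_mono F F' x y : F \subset F' -> connect (adj F) x y -> connect (adj F') x y.
Proof.
move=> sub; apply: connect_sub => a b hab; apply: connect1.
by rewrite /adj (subsetP sub).
Qed.

Definition cyc (c : seq T) : {set {set T}} := [set [set v; next c v] | v in c].

Lemma verts_cyc (c : seq T) : verts (cyc c) = [set v | v \in c].
Proof.
apply/setP => x; rewrite !inE; apply/existsP/idP.
  case=> f /andP[/imsetP[v vc ->]]; rewrite !inE => /orP[/eqP->|/eqP->] //.
  by rewrite mem_next.
move=> xc; exists [set x; next c x]; rewrite !inE eqxx andbT.
by apply/imsetP; exists x.
Qed.

Lemma cyc_sub D (c : seq T) : cycle (adj D) c -> cyc c \subset D.
Proof.
move=> cy; apply/subsetP => f /imsetP[v vc ->].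
exact: (next_cycle cy vc).
Qed.

Lemma prev_at_mem (v y : T) (s : seq T) : v \notin s -> prev_at v v y s \in y :: s.
Proof.
elim: s y => [|z s IH] y /=; first by rewrite eqxx inE eqxx.
rewrite inE negb_or => /andP[vz vs]; rewrite (negbTE vz).
by rewrite inE (IH z vs) orbT.
Qed.

Lemma next_ne (c : seq T) v : uniq c -> 3 <= size c -> v \in c ->
  next c v != v /\ next c v != prev c v.
Proof.
move=> uc sz vc; case: (rot_to vc) => i s hs.
have urc : uniq (rot i c) by rewrite rot_uniq.
rewrite -(next_rot i uc) -(prev_rot i uc) hs.
have szs : 2 <= size s by move: sz; rewrite -(size_rot i) hs.
move: urc; rewrite hs.
case: s hs szs => [|a [|b s']] // hs _ /=; rewrite !inE !negb_or => /andP[/and3P[va vb vs] /andP[/andP[ab a_s] /andP[bs _]]].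
rewrite eqxx (negbTE va) (negbTE vb) eq_sym va; split=> //.
apply/negP=> /eqP ha; have := prev_at_mem b vs; rewrite -ha.
by rewrite !inE (negbTE ab) (negbTE a_s).
Qed.

Lemma deg_cyc (c : seq T) v : uniq c -> 3 <= size c -> v \in c ->
  #|[set f in cyc c | v \in f]| = 2.
Proof.
move=> uc sz vc; have [n1 n2] := next_ne uc sz vc.
have -> : [set f in cyc c | v \in f] = [set [set v; next c v]; [set prev c v; v]].
  apply/setP => f; rewrite !inE; apply/andP/orP.
    case=> /imsetP[u uc' ->]; rewrite !inE => /orP[/eqP->|/eqP hv]; first by left.
    by right; rewrite hv (prev_next uc) setUC.
  case=> /eqP->; rewrite !inE eqxx ?orbT; split=> //; apply/imsetP.
    by exists v.
  by exists (prev c v); rewrite ?mem_prev // (next_prev uc) setUC.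
suff ne : [set v; next c v] != [set prev c v; v] by rewrite cards2 ne.
apply/negP => /eqP he.
have : next c v \in [set v; next c v] by rewrite !inE eqxx orbT.
by rewrite he !inE (negbTE n1) (negbTE n2).
Qed.

Lemma cyc_is_cycle (c : seq T) : uniq c -> 3 <= size c -> is_cycle (cyc c).
Proof.
move=> uc sz; apply/and3P; split.
- case: c uc sz => [|h t] // _ _; apply/set0Pn; exists [set h; next (h :: t) h].
  by apply/imsetP; exists h; rewrite ?inE ?eqxx.
- by apply/forall_inP => x; rewrite verts_cyc inE => xc; rewrite deg_cyc.
have cy : cycle (adj (cyc c)) c.
  apply: (cycle_from_next uc) => x xc; rewrite /adj; apply/imsetP; by exists x.
case: c uc sz cy => [|h t] // _ _; rewrite /= => pth.
have hc z : z \in h :: t -> connect (adj (cyc (h :: t))) h z.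
  move=> zin; apply: (path_connect pth).
  by rewrite in_cons mem_rcons zin orbT.
apply/forall_inP => x; rewrite verts_cyc in_set => xc; apply/forall_inP => y.
rewrite in_set => yc.
by apply: (connect_trans _ (hc _ yc)); rewrite conn_sym; apply: hc.
Qed.

Lemma adj_mono F F' : F \subset F' -> subrel (adj F) (adj F').
Proof. by move=> sub a b; rewrite /adj => /(subsetP sub). Qed.

Lemma conn_cycle F x y : x != y -> [set x; y] \notin F -> connect (adj F) x y ->
  exists2 C : {set {set T}}, C \subset [set x; y] |: F &
    is_cycle C && (verts C \subset [set v | connect (adj F) x v]).
Proof.
move=> xy nF /connectP[p pth ly].
case/shortenP: pth ly => p' pth' up' _ ly.
have sz : 3 <= size (x :: p').
  case: p' pth' up' ly => [|z [|w q]] //= pth' up' ly.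
    by rewrite ly eqxx in xy.
  by move: pth'; rewrite andbT /adj -ly (negbTE nF).
exists (cyc (x :: p')).
  apply: cyc_sub; rewrite /= rcons_path -ly; apply/andP; split.
    by apply: sub_path pth'; apply: adj_mono; apply: subsetUr.
  by rewrite /adj setUC setU11.
rewrite cyc_is_cycle //; apply/subsetP => v; rewrite verts_cyc !in_set => vin.
exact: (path_connect pth').
Qed.

Lemma edge_other (f : {set T}) z : #|f| = 2 -> z \in f -> exists w, w != z /\ f = [set z; w].
Proof.
move=> /eqP /cards2P [a [b [ab ->]]]; rewrite !inE => /orP[/eqP->|/eqP->].
  by exists b; rewrite eq_sym.
by exists a; rewrite setUC.
Qed.

Definition two_edges D := forall f, f \in D -> #|f| = 2.
Definition mindeg2 D := forall v, v \in verts D -> 1 < #|[set f in D | v \in f]|.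

Lemma step D z r : two_edges D -> mindeg2 D -> z \in verts D ->
  uniq (z :: r) -> path (adj D) z r ->
  (exists2 C : {set {set T}}, C \subset D & is_cycle C) \/
  exists w, [/\ w \notin z :: r, w \in verts D & adj D w z].
Proof.
move=> tw md zv uz pz.
have [w [wz wD wp]] : exists w, [/\ w != z, [set z; w] \in D & w != head z r].
  have /card_gt1P [e1 [e2 [h1 h2 e12]]] := md _ zv.
  move: h1 h2; rewrite !inE => /andP[e1D ze1] /andP[e2D ze2].
  have [w1 [w1z def1]] := edge_other (tw _ e1D) ze1.
  have [w2 [w2z def2]] := edge_other (tw _ e2D) ze2.
  case: (eqVneq w1 (head z r)) => hw1.
    exists w2; split=> //; first by rewrite -def2.
    apply/negP => /eqP hw2; move: e12; rewrite def1 def2 hw1 hw2 => /eqP; by apply.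
  by exists w1; split=> //; rewrite -def1.
case: (boolP (w \in r)) => wr.
  left; case/splitPr: wr uz pz wp => r1 r2 uz pz wp.
  have sz : 3 <= size (z :: rcons r1 w).
    by case: r1 uz pz wp => [|a r1] //= _ _; [move/eqP | rewrite size_rcons].
  have uc : uniq (z :: rcons r1 w).
    by move: uz; rewrite -cat_rcons -cat_cons cat_uniq => /andP[].
  exists (cyc (z :: rcons r1 w)); last exact: cyc_is_cycle.
  apply: cyc_sub; rewrite /= rcons_path rcons_path last_rcons.
  move: pz; rewrite cat_path /= => /and3P[-> -> _] /=.
  by rewrite /adj setUC.
right; exists w; split.
- by rewrite in_cons negb_or wz.
- by rewrite inE; apply/existsP; exists [set z; w]; rewrite wD !inE eqxx orbT.
- by rewrite /adj setUC.
Qed.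

Lemma grow D n z r : two_edges D -> mindeg2 D -> #|T| - size (z :: r) <= n ->
  z \in verts D -> uniq (z :: r) -> path (adj D) z r ->
  exists2 C : {set {set T}}, C \subset D & is_cycle C.
Proof.
move=> tw md; elim: n z r => [|n IH] z r hn zv uz pz;
  case: (step tw md zv uz pz) => // [[w [wn wv wa]]].
  have uw : uniq (w :: z :: r) by rewrite /= wn.
  move/card_uniqP: uw => cu; have := max_card (mem (w :: z :: r)); rewrite cu /=.
  move: hn => /=; lia.
apply: (IH w (z :: r)) => //=; first by move: hn => /=; lia.
  by rewrite wn.
by rewrite wa.
Qed.

Lemma find_cycle D : two_edges D -> mindeg2 D -> D != set0 ->
  exists2 C : {set {set T}}, C \subset D & is_cycle C.
Proof.
move=> tw md /set0Pn [f fD].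
have /eqP/cards2P [z [w [_ deff]]] := tw _ fD.
apply: (grow (n := #|T|) (z := z) (r := [::])) => //.
- lia.
- by rewrite inE; apply/existsP; exists f; rewrite fD deff !inE eqxx.
Qed.

Lemma degC C v : is_cycle C -> #|[set f in C | v \in f]| = 0 \/ #|[set f in C | v \in f]| = 2.
Proof.
case/and3P => _ /forall_inP dg _; case: (boolP (v \in verts C)) => vv.
  by right; apply/eqP; apply: dg.
left; apply/eqP; rewrite cards_eq0; apply/eqP/setP => f; rewrite !inE.
apply/negbTE/negP => /andP[fC vf]; move/negP: vv; apply.
by rewrite inE; apply/existsP; exists f; rewrite fC.
Qed.

Lemma cycle_has_e F e C : is_forest F -> is_cycle C -> C \subset e |: F -> e \in C.
Proof.
move=> /forallP fo cy sub; apply/negPn/negP => eC.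
have := fo C; rewrite cy implybF => /negP; apply.
apply/subsetP => f fC; have := subsetP sub f fC; rewrite !inE => /orP[/eqP fe|] //.
by rewrite -fe fC in eC.
Qed.

Lemma uniq_cycle F e C1 C2 : two_edges (e |: F) -> is_forest F ->
  is_cycle C1 -> is_cycle C2 -> C1 \subset e |: F -> C2 \subset e |: F -> C1 = C2.
Proof.
move=> tw fo c1 c2 s1 s2.
have e1 := cycle_has_e fo c1 s1; have e2 := cycle_has_e fo c2 s2.
apply/eqP/negPn/negP => ne.
set D := (C1 :\: C2) :|: (C2 :\: C1).
have sD : D \subset F.
  apply/subsetP => f; rewrite !inE => /orP[/andP[n2 f1]|/andP[n1 f2]].
    have := subsetP s1 f f1; rewrite !inE => /orP[/eqP fe|//].
    by rewrite fe e2 in n2.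
  have := subsetP s2 f f2; rewrite !inE => /orP[/eqP fe|//].
  by rewrite fe e1 in n1.
have D0 : D != set0.
  apply/negP => /eqP D0; move/negP: ne; apply; rewrite eqEsubset.
  by rewrite -!setD_eq0; apply/andP; split; apply/eqP/setP => f;
    move/setP: D0 => /(_ f); rewrite !inE; case: (f \in C1); case: (f \in C2).
have twD : two_edges D.
  by move=> f fD; apply: tw; rewrite inE (subsetP sD f fD) orbT.
have mdD : mindeg2 D.
  move=> v vD.
  set A1 := [set f in C1 | v \in f]; set A2 := [set f in C2 | v \in f].
  have -> : [set f in D | v \in f] = (A1 :\: A2) :|: (A2 :\: A1).
    apply/setP => f; rewrite !inE.
    by case: (f \in C1); case: (f \in C2); case: (v \in f).
  have hI : (A1 :\: A2) :&: (A2 :\: A1) = set0.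
    apply/setP => f; rewrite !inE.
    by case: (f \in C1); case: (f \in C2); case: (v \in f).
  have pos : 0 < #|(A1 :\: A2) :|: (A2 :\: A1)|.
    move: vD; rewrite inE => /existsP[f /andP[fD vf]].
    apply/card_gt0P; exists f; move: fD; rewrite !inE vf.
    by case: (f \in C1); case: (f \in C2).
  move: pos; rewrite cardsU hI cards0.
  have h1 := cardsID A2 A1; have h2 := cardsID A1 A2; rewrite setIC in h2.
  have := degC v c1; have := degC v c2; rewrite -/A1 -/A2.
  lia.
have [C sC cC] := find_cycle twD mdD D0.
move/forallP: fo => /(_ C); rewrite cC implybF => /negP; apply.
exact: subset_trans sC sD.
Qed.

Definition cl F u := [set v | connect (adj F) u v].
Definition cls F := [set cl F u | u : T].

Lemma connect_add F x y a b :
  connect (adj ([set x; y] |: F)) a b =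
  connect (adj F) a b ||
  ((connect (adj F) a x || connect (adj F) a y) &&
   (connect (adj F) b x || connect (adj F) b y)).
Proof.
set F' := [set x; y] |: F.
set P := fun z => connect (adj F) z x || connect (adj F) z y.
have PC a' c : connect (adj F) a' c -> P c -> P a'.
  rewrite /P => h /orP[] h'; apply/orP; [left|right]; exact: connect_trans h h'.
have sF : F \subset F' by apply: subsetUr.
apply/idP/idP.
  case/connectP => p pth ->; elim: p a pth => [|c p IH] a /=.
    by rewrite connect0.
  case/andP => hac /IH {IH}; rewrite -/(P a) -/(P (last c p)).
  move: hac; rewrite /adj !inE => /orP[/eqP he|hac].
    have Pa : P a.
      have : a \in [set x; y] by rewrite -he !inE eqxx.
      by rewrite !inE /P => /orP[]/eqP->; rewrite connect0 ?orbT.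
    have Pc : P c.
      have : c \in [set x; y] by rewrite -he !inE eqxx orbT.
      by rewrite !inE /P => /orP[]/eqP->; rewrite connect0 ?orbT.
    case/orP => [hcb|/andP[_ ->]]; last by rewrite Pa orbT.
    by rewrite Pa (PC _ _ _ Pc) ?orbT // conn_sym.
  have hac' : connect (adj F) a c by apply: connect1.
  case/orP => [hcb|/andP[hc ->]].
    by rewrite (connect_trans hac' hcb).
  by rewrite (PC _ _ hac' hc) orbT.
have toX z : P z -> connect (adj F') z x.
  case/orP => h; first exact: conn_mono h.
  apply: connect_trans (conn_mono sF h) _; apply: connect1.
  by rewrite /adj setUC setU11.
case/orP => [h|/andP[ha hb]]; first exact: conn_mono h.
by apply: connect_trans (toX _ ha) _; rewrite conn_sym; apply: toX.
Qed.

Lemma cl_eq F a b : connect (adj F) a b -> cl F a = cl F b.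
Proof.
move=> h; apply/setP => v; rewrite !inE; apply/idP/idP => h'.
  by apply: connect_trans h'; rewrite conn_sym.
exact: connect_trans h h'.
Qed.

Lemma cls_add F x y : ~~ connect (adj F) x y ->
  #|cls ([set x; y] |: F)| + 1 = #|cls F|.
Proof.
move=> nxy.
set F' := [set x; y] |: F.
set P := fun z => connect (adj F) z x || connect (adj F) z y.
set Cxy := cl F x :|: cl F y.
have PC a' c : connect (adj F) a' c -> P c -> P a'.
  rewrite /P => h /orP[] h'; apply/orP; [left|right]; exact: connect_trans h h'.
have clN a : cl F' a = if P a then Cxy else cl F a.
  apply/setP => v; rewrite !inE connect_add -/(P a) -/(P v).
  case: ifP => Pa; last by rewrite andFb orbF inE.
  rewrite andTb !inE (conn_sym F x v) (conn_sym F y v) -/(P v); apply/idP/idP.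
    case/orP => [h|->] //; apply: PC (Pa).
    by rewrite conn_sym.
  by move=> h; rewrite h orbT.
have Px : P x by rewrite /P connect0.
have Py : P y by rewrite /P connect0 orbT.
have CxyIn : Cxy \in cls F' by apply/imsetP; exists x => //; rewrite clN Px.
have Cxy_ne : cl F x != cl F y.
  apply/negP => /eqP h; move/negP: nxy; apply.
  have : y \in cl F y by rewrite inE connect0.
  by rewrite -h inE.
have sub2 : [set cl F x; cl F y] \subset cls F.
  by apply/subsetP => K; rewrite !inE => /orP[]/eqP->; apply/imsetP; [exists x|exists y].
have eqD : cls F' :\ Cxy = cls F :\: [set cl F x; cl F y].
  apply/setP => K; rewrite !inE; apply/andP/andP.
    case=> nK /imsetP[a _ ha]; subst K; move: nK; rewrite clN.
    case: ifP => Pa; first by move/eqP.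
    move=> _; split; last by apply/imsetP; exists a.
    apply/negP => /orP[]/eqP h; move/negbT: Pa; apply/negP; rewrite /P.
      have : a \in cl F x by rewrite -h inE connect0.
      by rewrite inE conn_sym => ->.
    have : a \in cl F y by rewrite -h inE connect0.
    by rewrite inE conn_sym => ->; rewrite orbT.
  case=> /norP[nx ny] /imsetP[a _ ha]; subst K.
  have Pa : ~~ P a.
    apply/negP => /orP[] h.
      by move/negP: nx; apply; apply/eqP; apply: cl_eq.
    by move/negP: ny; apply; apply/eqP; apply: cl_eq.
  split; last by apply/imsetP; exists a => //; rewrite clN (negbTE Pa).
  apply/negP => /eqP h; move/negP: Pa; apply.
  have : x \in Cxy by rewrite !inE connect0.
  by rewrite -h inE /P => ->.
have h1 := cardsD1 Cxy (cls F'); rewrite CxyIn eqD in h1.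
have h2 := cardsID [set cl F x; cl F y] (cls F).
rewrite (setIidPr sub2) cards2 Cxy_ne in h2.
lia.
Qed.

Lemma forest_sub F F0 : is_forest F -> F0 \subset F -> is_forest F0.
Proof.
move=> /forallP fo sub; apply/forallP => C; apply/implyP => sC.
by have := fo C; rewrite (subset_trans sC sub).
Qed.

Lemma forest_card n F : #|F| = n -> two_edges F -> is_forest F ->
  #|F| + #|cls F| = #|T|.
Proof.
elim: n F => [|n IH] F hF tw fo.
  move/eqP: hF; rewrite cards_eq0 => /eqP ->; rewrite cards0 add0n.
  have -> : cls set0 = [set [set u] | u : T].
    apply/setP => K; apply/imsetP/imsetP => [] [u _ ->]; exists u => //;
    apply/setP => v; rewrite !inE; apply/idP/idP;
    try (case/connectP => -[|c p] /=; [by move=> _ ->| by rewrite /adj inE]);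
    by move/eqP->; rewrite connect0.
  by rewrite card_imset ?cardsT //; apply: set1_inj.
have : 0 < #|F| by rewrite hF.
case/card_gt0P => f fF.
have /eqP/cards2P [x [y [xy fdef]]] := tw _ fF.
set F0 := F :\ f.
have hF0 : #|F0| = n by move: hF; rewrite (cardsD1 f) fF add1n => -[].
have sF0 : F0 \subset F by apply: subsetDl.
have fo0 := forest_sub fo sF0.
have tw0 : two_edges F0 by move=> g gF; apply: tw; apply: (subsetP sF0).
have defF : F = [set x; y] |: F0 by rewrite -fdef setD1K.
have nc : ~~ connect (adj F0) x y.
  apply/negP => h.
  have nF : [set x; y] \notin F0 by rewrite -fdef setD11.
  have [C sC /andP[cC _]] := conn_cycle xy nF h.
  move/forallP: fo => /(_ C); rewrite cC implybF => /negP; apply.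
  by rewrite defF.
have := IH F0 hF0 tw0 fo0; have := cls_add nc; rewrite -defF.
lia.
Qed.

Lemma Bchar (V : {set T}) (f : {set T}) : #|f| = 2 ->
  ((f \subset V) || (f \subset ~: V)) = (#|f :&: V| != 1).
Proof.
move=> h2; have c := cardsID V f.
rewrite -setD_eq0 -cards_eq0 -disjoints_subset -setI_eq0 -cards_eq0.
move: c; rewrite h2; case: #|f :&: V| => [|[|[|a]]]; case: #|f :\: V| => [|[|[|b]]] //=; lia.
Qed.
End S.

Lemma card_sum (I : finType) (A : {set I}) (P : pred I) :
  #|[set i in A | P i]| = \sum_(i in A) (P i : nat).
Proof.
rewrite -sum1_card big_mkcond /= [RHS]big_mkcond /=; apply: eq_bigr => i _.
by rewrite !inE; case: (i \in A); case: (P i).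
Qed.

Lemma deg_sum (T : finType) (E : {set {set T}}) (V : {set T}) : two_edges E ->
  \sum_(u in V) deg E u =
  #|[set f in E | #|f :&: V| == 1]| + 2 * #|[set f in E | #|f :&: V| == 2]|.
Proof.
move=> tw.
transitivity (\sum_(f in E) #|f :&: V|).
  rewrite /deg; under eq_bigr do rewrite card_sum.
  rewrite exchange_big /=; apply: eq_bigr => f fE.
  by rewrite -card_sum; apply: eq_card => u; rewrite !inE andbC.
have -> : #|[set f in E | #|f :&: V| == 1]| = \sum_(f in E) (#|f :&: V| == 1 : nat) by apply: card_sum.
have -> : #|[set f in E | #|f :&: V| == 2]| = \sum_(f in E) (#|f :&: V| == 2 : nat) by apply: card_sum.
rewrite big_distrr /= -big_split /=; apply: eq_bigr => f fE.
have : #|f :&: V| <= 2 by rewrite -(tw _ fE) subset_leq_card // subsetIl.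
by case: #|f :&: V| => [|[|[|k]]].
Qed.

Theorem lemma5p3 (T : finType) (E Ft Ff : {set {set T}}) (V1 : {set T}) :
  simple_graph E ->
  valid_edge_partition E Ft Ff ->
  spanning_2forest_parts Ff V1 ->
  odd (\sum_(u in V1) deg E u) ->
  odd (\sum_(u in ~: V1) deg E u) ->
  odd #|T| ->
  odd #|[set C : {set {set T}} | compatible_cycle E Ft V1 C]|.
Proof.
move=> sg /and4P[/eqP hE dj st _] /and4P[foF V1n V2n /forallP sep] oV _ oT.
have tw : two_edges E by move=> f fE; move/forall_inP: sg => /(_ f fE) /eqP.
have sepxy x y : connect (adj Ff) x y = ((x \in V1) == (y \in V1)).
  by apply/eqP; move/forallP: (sep x) => /(_ y).
have FtE : Ft \subset E by rewrite -hE subsetUl.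
have FfE : Ff \subset E by rewrite -hE subsetUr.
have twt : two_edges Ft by move=> f fF; apply: tw; apply: (subsetP FtE).
have twf : two_edges Ff by move=> f fF; apply: tw; apply: (subsetP FfE).
have cardFt : #|Ft| + 1 = #|T|.
  case/andP: st => foT /forallP ct.
  have := forest_card (erefl _) twt foT.
  suff -> : #|cls Ft| = 1 by [].
  have [u _] : exists u, u \in V1 by apply/set0Pn.
  have -> : cls Ft = [set setT].
    apply/setP => K; rewrite inE; apply/imsetP/eqP => [[v _ ->]|->].
      by apply/setP => w; rewrite !inE; move/forallP: (ct v) => /(_ w).
    exists u => //; apply/setP => w; rewrite !inE; move/forallP: (ct u) => /(_ w).
    by move=> ->.
  by rewrite cards1.
set X := [set f in E | #|f :&: V1| == 1].
have oX : odd #|X| by move: oV; rewrite (deg_sum V1 tw) oddD oddM andFb addbF.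
set M := [set f in Ft | (f \subset V1) || (f \subset ~: V1)].
have FfB f : f \in Ff -> (f \subset V1) || (f \subset ~: V1).
  move=> fF; have /eqP/cards2P [a [b [_ fd]]] := twf _ fF.
  have : connect (adj Ff) a b by apply: connect1; rewrite /adj -fd.
  rewrite sepxy fd; case: (boolP (a \in V1)) => ha /eqP hb; apply/orP; [left|right];
    apply/subsetP => z; rewrite !inE => /orP[]/eqP->; by rewrite -?hb ?ha.
have cardM : #|Ft| = #|M| + #|X|.
  have := cardsID [set f : {set T} | (f \subset V1) || (f \subset ~: V1)] Ft.
  have -> : Ft :&: [set f : {set T} | (f \subset V1) || (f \subset ~: V1)] = M.
    by apply/setP => f; rewrite !inE.
  have -> : Ft :\: [set f : {set T} | (f \subset V1) || (f \subset ~: V1)] = X.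
    apply/setP => f; rewrite !inE; apply/andP/andP.
      case=> nB fFt; have fE := subsetP FtE f fFt.
      by rewrite (Bchar V1 (tw _ fE)) negbK in nB.
    case=> fE h1; have nB : ~~ ((f \subset V1) || (f \subset ~: V1)).
      by rewrite (Bchar V1 (tw _ fE)) h1.
    split=> //; move: fE; rewrite -hE inE => /orP[//|fF].
    by rewrite (FfB f fF) in nB.
  by move=> <-.
set S := [set C : {set {set T}} | compatible_cycle E Ft V1 C].
have sub_of C f : C \in S -> f \in C -> f \in Ft -> C \subset f |: Ff.
  rewrite inE => /and4P[sCE _ _ /cards1P[g hg]] fC fFt.
  have fg : f = g.
    have : f \in C :&: Ft by rewrite inE fC fFt.
    by rewrite hg inE => /eqP.
  apply/subsetP => k kC; rewrite !inE.
  have := subsetP sCE k kC; rewrite -hE inE => /orP[kFt|->]; last by rewrite orbT.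
  have : k \in C :&: Ft by rewrite inE kC kFt.
  by rewrite hg inE fg => ->.
have twfF f : f \in E -> two_edges (f |: Ff).
  move=> fE g; rewrite !inE => /orP[/eqP->|gF]; [exact: tw | exact: twf].
have un C C' f : C \in S -> C' \in S -> f \in C -> f \in C' -> f \in Ft -> C = C'.
  move=> hC hC' fC fC' fFt.
  apply: (uniq_cycle (twfF f (subsetP FtE f fFt)) foF).
  - by move: hC; rewrite inE => /and4P[].
  - by move: hC'; rewrite inE => /and4P[].
  - exact: sub_of hC fC fFt.
  - exact: sub_of hC' fC' fFt.
have ex f : f \in M -> exists2 C, C \in S & f \in C.
  rewrite inE => /andP[fFt side].
  have fE := subsetP FtE f fFt.
  have /eqP/cards2P [x [y [xy fdef]]] := tw _ fE.
  have xf : x \in f by rewrite fdef !inE eqxx.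
  have yf : y \in f by rewrite fdef !inE eqxx orbT.
  have xyV : (x \in V1) == (y \in V1).
    case/orP: side => /subsetP s; first by rewrite (s x xf) (s y yf).
    by move: (s x xf) (s y yf); rewrite !inE => /negbTE-> /negbTE->.
  have cxy : connect (adj Ff) x y by rewrite sepxy.
  have nF : [set x; y] \notin Ff by rewrite -fdef (disjointFr dj fFt).
  have [C sC /andP[cC vC]] := conn_cycle xy nF cxy.
  rewrite -fdef in sC.
  have fC : f \in C := cycle_has_e foF cC sC.
  exists C => //; rewrite inE; apply/and4P; split => //.
  - apply/subsetP => g /(subsetP sC); rewrite !inE => /orP[/eqP->|gF] //.
    exact: (subsetP FfE g gF).
  - case: (boolP (x \in V1)) => hx; apply/orP; [left|right];
      apply/subsetP => v /(subsetP vC); rewrite inE sepxy.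
      by rewrite hx => /eqP <-.
    by rewrite (negbTE hx) => /eqP h; rewrite inE -h.
  - have -> : C :&: Ft = [set f].
      apply/setP => g; rewrite !inE; apply/andP/eqP => [[gC gFt]|->] //.
      have := subsetP sC g gC; rewrite !inE => /orP[/eqP //|gF].
      by rewrite (disjointFr dj gFt) in gF.
    by rewrite cards1.
have inM C : C \in S -> exists2 f, f \in M & C :&: Ft = [set f].
  move=> hC; move: (hC); rewrite inE => /and4P[_ _ vs /cards1P[f hf]]; exists f => //.
  have : f \in C :&: Ft by rewrite hf inE.
  rewrite inE => /andP[fC fFt].
  rewrite inE fFt /=.
  have fv : f \subset verts C.
    apply/subsetP => v vf; rewrite inE; apply/existsP; exists f; by rewrite fC.
  case/orP: vs => s; apply/orP; [left|right]; exact: subset_trans fv s.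
pose h := fun f => odflt set0 [pick C in S | f \in C].
have hP f : f \in M -> h f \in S /\ f \in h f.
  move=> fM; rewrite /h; case: pickP => [C /andP[]|none] //=.
  have [C hC fC] := ex f fM; by have := none C; rewrite hC fC.
have MFt f : f \in M -> f \in Ft by rewrite inE => /andP[].
have eqS : S = h @: M.
  apply/setP => C; apply/idP/imsetP => [hC|[f fM ->]]; last by case: (hP f fM).
  have [f fM hf] := inM C hC; exists f => //.
  have [hS hfC] := hP f fM.
  have fC : f \in C.
    have : f \in C :&: Ft by rewrite hf inE.
    by rewrite inE => /andP[].
  exact: un C (h f) f hC hS fC hfC (MFt f fM).
have cardS : #|S| = #|M|.
  rewrite eqS card_in_imset // => f1 f2 m1 m2 he.
  have [hS f1C] := hP f1 m1; have [_ f2C] := hP f2 m2; rewrite -he in f2C.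
  move: hS; rewrite inE => /and4P[_ _ _ /cards1P[g hg]].
  have : f1 \in h f1 :&: Ft by rewrite inE f1C MFt.
  have : f2 \in h f1 :&: Ft by rewrite inE f2C MFt.
  by rewrite hg !inE => /eqP-> /eqP->.
rewrite cardS; move: oT; rewrite -cardFt cardM !oddD oX.
by case: (odd #|M|).
Qed.
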